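(* Let $B\ge1$, $G=\{0,\frac1B,\dots,1\}$, $t\in G$ and $\eta\in(0,t)$. For each $r<0$ there exists $f^*\in\mathcal F_{r,\eta}$ with $\mathcal T_t(f^* )=\sup_{f\in\mathcal F_{r,\eta}}\mathcal T_t(f)$.
   Context: Identify a probability mass function $f$ on $G$ with $(f_0,\dots,f_B)$, $f_i=f(i/B)$; let $\mathcal T_t(f)=\sum_{i\ge Bt}f_i$ and $\mathcal E(f)=\sum_{i=1}^B\frac iBf_i$. For $r<0$, $a,b\ge0$, $\lambda\in(0,1)$, let $M_r(a,b;\lambda)=\{(1-\lambda)a^r+\lambda b^r\}^{1/r}$ if $ab>0$ and $0$ if $ab=0$. A non-negative function $g$ on an interval is $r$-concave if $g((1-\lambda)x+\lambda y)\ge M_r(g(x),g(y);\lambda)$ for all $x,y$, $\lambda\in(0,1)$ (for $r<0$ this is equivalent to $g^r$ being convex, with $0^r=\infty$). A probability mass function $f$ on $G$ is $r$-concave if the linear interpolant to $\{(i,f_i):i=0,\dots,B\}$ is $r$-concave on $[0,B]$. $\mathcal F_r$ denotes the set of $r$-concave probability mass functions on $G$ and $\mathcal F_{r,\eta}=\{f\in\mathcal F_r:\mathcal E(f)\le\eta\}$. *)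

(* Defs.v *)
From Stdlib Require Import Reals Lra.
Open Scope R_scope.

(* A probability mass function on G = {0, 1/B, ..., 1} is represented by
   f : nat -> R with f i = f(i/B) for i = 0..B (values beyond B are irrelevant). *)
Definition is_pmf (B : nat) (f : nat -> R) : Prop :=
  (forall i, (i <= B)%nat -> 0 <= f i) /\ sum_f_R0 f B = 1.

Definition tail (B : nat) (t : R) (f : nat -> R) : R :=
  sum_f_R0 (fun i => if Rle_dec (INR B * t) (INR i) then f i else 0) B.

Definition expect (B : nat) (f : nat -> R) : R :=
  sum_f_R0 (fun i => INR i / INR B * f i) B.

Definition Mr (r a b lam : R) : R :=
  if Rlt_dec 0 (a * b) then
    Rpower ((1 - lam) * Rpower a r + lam * Rpower b r) (/ r)
  else 0.

Definition r_concave_on (r lo hi : R) (g : R -> R) : Prop :=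
  (forall x, lo <= x <= hi -> 0 <= g x) /\
  forall x y lam, lo <= x <= hi -> lo <= y <= hi -> 0 < lam < 1 ->
    g ((1 - lam) * x + lam * y) >= Mr r (g x) (g y) lam.

Definition interp (f : nat -> R) (x : R) : R :=
  let i := Z.to_nat (Int_part x) in
  f i + (x - INR i) * (f (S i) - f i).

Definition r_concave_pmf (B : nat) (r : R) (f : nat -> R) : Prop :=
  r_concave_on r 0 (INR B) (interp f).

Definition F_r_eta (B : nat) (r eta : R) (f : nat -> R) : Prop :=
  is_pmf B f /\ r_concave_pmf B r f /\ expect B f <= eta.

(* Main.v *)
Require Import Defs.
From Stdlib Require Import Reals Lra Lia ZArith.
Open Scope R_scope.

Lemma Rpower_pos x y : 0 < Rpower x y.
Proof. unfold Rpower; apply exp_pos. Qed.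

Lemma bern u r : 0 < u -> r < 0 -> 1 + r * (u - 1) <= Rpower u r.
Proof.
intros Hu Hr. unfold Rpower.
assert (H1 := exp_ineq1_le (ln u)). rewrite exp_ln in H1 by exact Hu.
assert (H2 := exp_ineq1_le (r * ln u)).
nra.
Qed.

Lemma ln_le x y : 0 < x -> x <= y -> ln x <= ln y.
Proof.
intros Hx [Hl|He]. left; apply ln_increasing; auto. subst; lra.
Qed.

Lemma exp_le x y : x <= y -> exp x <= exp y.
Proof. intros [Hl|He]. left; apply exp_increasing; auto. subst; lra. Qed.

Lemma power_mean a b lam r : 0 < a -> 0 < b -> 0 < lam < 1 -> r < 0 ->
  Rpower ((1 - lam) * Rpower a r + lam * Rpower b r) (/ r) <= (1 - lam) * a + lam * b.
Proof.
intros Ha Hb Hl Hr.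
set (m := (1 - lam) * a + lam * b).
assert (Hm : 0 < m) by (unfold m; nra).
assert (Ea : Rpower a r = Rpower m r * Rpower (a / m) r).
{ rewrite Rpower_mult_distr; [|lra| apply Rdiv_lt_0_compat; lra]. f_equal. field. lra. }
assert (Eb : Rpower b r = Rpower m r * Rpower (b / m) r).
{ rewrite Rpower_mult_distr; [|lra| apply Rdiv_lt_0_compat; lra]. f_equal. field. lra. }
assert (Ba := bern (a / m) r (Rdiv_lt_0_compat _ _ Ha Hm) Hr).
assert (Bb := bern (b / m) r (Rdiv_lt_0_compat _ _ Hb Hm) Hr).
assert (Hmr := Rpower_pos m r).
assert (Hsum : (1 - lam) * (1 + r * (a / m - 1)) + lam * (1 + r * (b / m - 1)) = 1).
{ unfold m in *. field. lra. }
assert (HS : Rpower m r <= (1 - lam) * Rpower a r + lam * Rpower b r).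
{ rewrite Ea, Eb.
  assert (Rpower m r * 1 <= Rpower m r * ((1 - lam) * Rpower (a/m) r + lam * Rpower (b/m) r)).
  { apply Rmult_le_compat_l. lra.
    assert (H1 := Rmult_le_compat_l (1 - lam) _ _ ltac:(lra) Ba).
    assert (H2 := Rmult_le_compat_l lam _ _ ltac:(lra) Bb).
    lra. }
  nra. }
assert (Hm2 : Rpower (Rpower m r) (/ r) = m).
{ rewrite Rpower_mult. rewrite Rinv_r by lra. apply Rpower_1; exact Hm. }
set (S := (1 - lam) * Rpower a r + lam * Rpower b r) in *.
rewrite <- Hm2.
assert (/ r < 0) by (apply Rinv_lt_0_compat; lra).
assert (ln (Rpower m r) <= ln S) by (apply ln_le; auto).
unfold Rpower at 1 2. apply exp_le. nra.
Qed.

Definition delta (i : nat) : R := if Nat.eqb i 0 then 1 else 0.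

Lemma floor_spec x : 0 <= x ->
  INR (Z.to_nat (Int_part x)) <= x < INR (Z.to_nat (Int_part x)) + 1.
Proof.
intros Hx. destruct (base_Int_part x) as [H1 H2].
assert (Hz : (0 <= Int_part x)%Z).
{ assert (IZR (-1) < IZR (Int_part x)) by (simpl; lra).
  apply lt_IZR in H. lia. }
rewrite INR_IZR_INZ, Z2Nat.id by exact Hz. lra.
Qed.

Lemma interp_delta x : 0 <= x -> interp delta x = if Rlt_dec x 1 then 1 - x else 0.
Proof.
intros Hx. unfold interp. cbv zeta.
destruct (floor_spec x Hx) as [H1 H2].
destruct (Z.to_nat (Int_part x)) as [|i].
- simpl in *. unfold delta; simpl. destruct (Rlt_dec x 1); lra.
- unfold delta; simpl.
  assert (1 <= INR (S i)) by (rewrite S_INR; assert (0 <= INR i) by apply pos_INR; lra).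
  destruct (Rlt_dec x 1); lra.
Qed.

Lemma sum_delta n : sum_f_R0 delta n = 1.
Proof. induction n; simpl; [reflexivity|]. rewrite IHn. unfold delta; simpl; lra. Qed.


Lemma sum_zero (f : nat -> R) n : (forall i, f i = 0) -> sum_f_R0 f n = 0.
Proof. intros H; induction n; simpl; rewrite ?IHn, H; lra. Qed.

Lemma delta_feasible B r eta : 0 < eta -> r < 0 -> F_r_eta B r eta delta.
Proof.
intros He Hr.
split; [split|split; [split|]].
- intros i _. unfold delta. destruct (Nat.eqb i 0); lra.
- apply sum_delta.
- intros x Hx. rewrite interp_delta by lra. destruct (Rlt_dec x 1); lra.
- intros x y lam Hx Hy Hl.
  assert (Hz : 0 <= (1 - lam) * x + lam * y) by nra.
  unfold Mr. rewrite !interp_delta by lra.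
  destruct (Rlt_dec x 1) as [Hx1|Hx1]; destruct (Rlt_dec y 1) as [Hy1|Hy1];
  destruct (Rlt_dec ((1 - lam) * x + lam * y) 1) as [Hz1|Hz1];
  destruct (Rlt_dec 0 _) as [Hp|Hp]; try lra; try nra.
  apply Rle_ge.
  replace (1 - ((1 - lam) * x + lam * y)) with ((1 - lam) * (1 - x) + lam * (1 - y)) by ring.
  apply power_mean; lra.
- unfold expect. rewrite sum_zero. lra. intros i. unfold delta.
  destruct i; simpl; [|]; lra.
Qed.

Lemma sum_nonneg (f : nat -> R) n :
  (forall j, (j <= n)%nat -> 0 <= f j) -> 0 <= sum_f_R0 f n.
Proof.
induction n as [|n IH]; intros Hf; simpl.
- apply Hf; lia.
- assert (0 <= sum_f_R0 f n) by (apply IH; intros; apply Hf; lia).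
  assert (0 <= f (S n)) by (apply Hf; lia). lra.
Qed.

Lemma sum_term_le (f : nat -> R) n i :
  (forall j, (j <= n)%nat -> 0 <= f j) -> (i <= n)%nat -> f i <= sum_f_R0 f n.
Proof.
induction n as [|n IH]; intros Hf Hi.
- replace i with 0%nat by lia. simpl; lra.
- simpl. destruct (Nat.eq_dec i (S n)) as [->|Hne].
  + assert (0 <= sum_f_R0 f n) by (apply sum_nonneg; intros; apply Hf; lia).
    lra.
  + assert (f i <= sum_f_R0 f n) by (apply IH; [intros; apply Hf; lia | lia]).
    assert (0 <= f (S n)) by (apply Hf; lia). lra.
Qed.

Lemma interp_eq f x : interp f x =
  f (Z.to_nat (Int_part x)) + (x - INR (Z.to_nat (Int_part x))) *
     (f (S (Z.to_nat (Int_part x))) - f (Z.to_nat (Int_part x))).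
Proof. reflexivity. Qed.

Lemma interp_ext B f g x :
  (forall i, (i <= B)%nat -> f i = g i) -> 0 <= x <= INR B ->
  interp f x = interp g x.
Proof.
intros Hfg Hx. rewrite !interp_eq.
destruct (floor_spec x (proj1 Hx)) as [H1 H2].
set (i := Z.to_nat (Int_part x)) in *.
destruct (lt_dec i B) as [Hl|Hl].
- rewrite !Hfg by lia. reflexivity.
- assert (INR B <= INR i) by (apply le_INR; lia).
  assert (Hx0 : x - INR i = 0) by lra.
  rewrite Hx0, !Rmult_0_l, !Rplus_0_r.
  assert (INR i <= INR B) by lra. apply INR_le in H0.
  apply Hfg; lia.
Qed.

Lemma F_ext B r eta f g :
  (forall i, (i <= B)%nat -> f i = g i) -> F_r_eta B r eta f -> F_r_eta B r eta g.
Proof.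
intros Hfg [[Hn Hs] [[Hc1 Hc2] He]].
assert (Hi : forall x, 0 <= x <= INR B -> interp f x = interp g x)
  by (intros; apply (interp_ext B); auto).
split; [split|split; [split|]].
- intros i Hi'. rewrite <- Hfg by exact Hi'. auto.
- rewrite <- Hs. apply sum_eq. intros i Hi'. symmetry; auto.
- intros x Hx. rewrite <- Hi by exact Hx. auto.
- intros x y lam Hx Hy Hl.
  assert (Hz : 0 <= (1 - lam) * x + lam * y <= INR B) by nra.
  rewrite <- !Hi by assumption. auto.
- unfold expect in *. rewrite <- He. apply Req_le. apply sum_eq.
  intros i Hi'. rewrite Hfg by exact Hi'. reflexivity.
Qed.

Lemma tail_ext B t f g :
  (forall i, (i <= B)%nat -> f i = g i) -> tail B t f = tail B t g.
Proof.
intros Hfg. unfold tail. apply sum_eq. intros i Hi.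
destruct (Rle_dec _ _); auto.
Qed.


Lemma Rpower_cont_pt p s : 0 < p -> continuity_pt (fun x => Rpower x s) p.
Proof.
intros Hp. apply derivable_continuous_pt.
exists (s * Rpower p (s - 1)). apply derivable_pt_lim_power; exact Hp.
Qed.

Module MC.
From HB Require Import structures.
From mathcomp Require Import all_boot all_order all_algebra.
From mathcomp Require Import all_classical all_reals all_analysis.
From mathcomp Require Import Rstruct Rstruct_topology.
Import Order.TTheory GRing.Theory Num.Theory.
Local Open Scope classical_set_scope.

Set Implicit Arguments.
Section Topo.
Variable T : topologicalType.
Local Open Scope ring_scope.

Lemma nbhs_Rlt (h : T -> R) (v : T) (c : R) :
  {for v, continuous h} -> Rlt (h v) c -> nbhs v (fun w => Rlt (h w) c).
Proof.
move=> hc /RltP hv.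
have : nbhs (h v) [set x : R | x < c].
  apply: open_nbhs_nbhs. split; last exact: hv.
  exact: open_lt.
move/hc => H.
have H2 : nbhs v (h @^-1` [set x : R | x < c]) := H.
by apply: filterS H2 => w /RltP.
Qed.

Lemma nbhs_Rgt (h : T -> R) (v : T) (c : R) :
  {for v, continuous h} -> Rlt c (h v) -> nbhs v (fun w => Rlt c (h w)).
Proof.
move=> hc /RltP hv.
have : nbhs (h v) [set x : R | c < x].
  apply: open_nbhs_nbhs. split; last exact: hv.
  exact: open_gt.
move/hc => H.
have H2 : nbhs v (h @^-1` [set x : R | c < x]) := H.
by apply: filterS H2 => w /RltP.
Qed.

Lemma contD (f g : T -> R) v : {for v, continuous f} -> {for v, continuous g} ->
  {for v, continuous (fun w => Rplus (f w) (g w))}.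
Proof. move=> fc gc.
have := @cvgD R R^o _ _ _ f g (f v) (g v) fc gc.
move=> H; exact: H.
Qed.

Lemma contM (f g : T -> R) v : {for v, continuous f} -> {for v, continuous g} ->
  {for v, continuous (fun w => Rmult (f w) (g w))}.
Proof. move=> fc gc.
have := @cvgM R _ _ _ f g (f v) (g v) fc gc.
move=> H; exact: H.
Qed.

Lemma contC (c : R) v : {for v, continuous (fun _ : T => c)}.
Proof. exact: cvg_cst. Qed.

Lemma contB (f g : T -> R) v : {for v, continuous f} -> {for v, continuous g} ->
  {for v, continuous (fun w => Rminus (f w) (g w))}.
Proof.
move=> fc gc.
have := contD fc (contM (@contC (Ropp 1) v) gc).
have E : (fun w => Rplus (f w) (Rmult (Ropp 1) (g w))) = (fun w => Rminus (f w) (g w)).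
  apply: funext => w. lra.
by rewrite E.
Qed.

Lemma contComp (f : T -> R) (g : R -> R) v : {for v, continuous f} ->
  continuity_pt g (f v) -> {for v, continuous (fun w => g (f w))}.
Proof. move=> fc /continuity_pt_cvg gc; exact: (continuous_comp fc gc). Qed.

Lemma contSum (h : nat -> T -> R) n v : (forall i, {for v, continuous (h i)}) ->
  {for v, continuous (fun w => sum_f_R0 (fun i => h i w) n)}.
Proof.
move=> hc; elim: n => [|n IH] /=; first exact: hc.
exact: contD.
Qed.

Lemma cl_le (A : set T) (h : T -> R) v c : closure A v -> {for v, continuous h} ->
  (forall w, A w -> Rle c (h w)) -> Rle c (h v).
Proof.
move=> Hv hc HA. case: (Rle_dec c (h v)) => // /Rnot_le_lt Hlt.
have N := nbhs_Rlt hc Hlt.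
have [w [Aw Nw]] := Hv _ N.
have := HA w Aw. move: Nw => /= Nw. lra.
Qed.

Lemma cl_ge (A : set T) (h : T -> R) v c : closure A v -> {for v, continuous h} ->
  (forall w, A w -> Rle (h w) c) -> Rle (h v) c.
Proof.
move=> Hv hc HA. case: (Rle_dec (h v) c) => // /Rnot_le_lt Hlt.
have N := nbhs_Rgt hc Hlt.
have [w [Aw Nw]] := Hv _ N.
have := HA w Aw. move: Nw => /= Nw. lra.
Qed.

End Topo.

Unset Implicit Arguments.
Section Main.
Local Open Scope ring_scope.
Variable B : nat.
Local Notation V := 'rV[R]_(B.+1).

Definition toF (v : V) : nat -> R := fun i => if (i <= B)%N then v ord0 (inord i) else 0%R.

Lemma toF_row (f : nat -> R) : exists w : V, forall i, le i B -> toF w i = f i.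
Proof.
exists (\row_(j < B.+1) f j) => i /ssrnat.leP Hi.
by rewrite /toF Hi mxE inordK // ltnS.
Qed.

Lemma toF_val (w : V) (i : 'I_B.+1) : toF w i = w ord0 i.
Proof. by rewrite /toF -ltnS ltn_ord inord_val. Qed.

Lemma toF_cont i v : {for v, continuous (fun w : V => toF w i)}.
Proof.
rewrite /toF; case: (i <= B)%N.
- exact: (@coord_continuous R 1 B.+1 ord0 (inord i) v).
- exact: contC.
Qed.

Lemma interp_cont x v : {for v, continuous (fun w : V => interp (toF w) x)}.
Proof.
rewrite /interp /=. apply: contD; first exact: toF_cont.
apply: contM; first exact: contC.
apply: contB; exact: toF_cont.
Qed.

Lemma tail_cont t v : {for v, continuous (fun w : V => tail B t (toF w))}.
Proof.
rewrite /tail; apply: contSum => i; case: Rle_dec => _; [exact: toF_cont | exact: contC].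
Qed.

Lemma expect_cont v : {for v, continuous (fun w : V => expect B (toF w))}.
Proof. rewrite /expect; apply: contSum => i; apply: contM; [exact: contC | exact: toF_cont]. Qed.

Lemma sum_cont v : {for v, continuous (fun w : V => sum_f_R0 (toF w) B)}.
Proof. apply: contSum => i; exact: toF_cont. Qed.

Definition Aset (r eta : R) := [set v : V | F_r_eta B r eta (toF v)].


Lemma A_closed r eta : Rlt r 0 -> closed (Aset r eta).
Proof.
move=> Hr v Hv.
have Hnn : forall i, le i B -> Rle 0 (toF v i).
  move=> i Hi; apply: (cl_le Hv (toF_cont i v)) => w [[Hn _] _]; exact: Hn.
have Hsum : sum_f_R0 (toF v) B = 1%R.
  apply: Rle_antisym.
  - apply: (cl_ge Hv (sum_cont v)) => w [[_ Hs] _]; rewrite Hs; exact: Rle_refl.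
  - apply: (cl_le Hv (sum_cont v)) => w [[_ Hs] _]; rewrite Hs; exact: Rle_refl.
have Hgn : forall x, Rle 0 x -> Rle x (INR B) -> Rle 0 (interp (toF v) x).
  move=> x H1 H2; apply: (cl_le Hv (interp_cont x v)) => w [_ [[Hg _] _]].
  exact: Hg (conj H1 H2).
have He : Rle (expect B (toF v)) eta.
  by apply: (cl_ge Hv (expect_cont v)) => w [_ [_ He]].
split; [split => // | split => //; split].
- move=> x Hx; exact: Hgn (proj1 Hx) (proj2 Hx).
move=> x y lam Hx Hy Hl.
have Hz : Rle 0 ((1 - lam) * x + lam * y) /\ Rle ((1 - lam) * x + lam * y) (INR B).
  by split; nra.
rewrite /Mr; case: Rlt_dec => Hp; last first.
  apply: Rle_ge; apply: Hgn; lra.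
have Hga := Hgn x (proj1 Hx) (proj2 Hx).
have Hgb := Hgn y (proj1 Hy) (proj2 Hy).
have Ha : Rlt 0 (interp (toF v) x) by nra.
have Hb : Rlt 0 (interp (toF v) y) by nra.
apply: Rnot_lt_ge => Hlt.
pose S := fun w : V => Rplus (Rmult (Rminus 1 lam) (Rpower (interp (toF w) x) r))
                        (Rmult lam (Rpower (interp (toF w) y) r)).
have HSv : Rlt 0 (S v).
  rewrite /S. have := Rpower_pos (interp (toF v) x) r. have := Rpower_pos (interp (toF v) y) r.
  move: Hl => [Hl1 Hl2]. nra.
have Sc : {for v, continuous S}.
  rewrite /S. apply: contD; apply: contM; try exact: contC.
  - apply: (contComp (g := fun u => Rpower u r)); first exact: interp_cont.
    exact: Rpower_cont_pt.
  - apply: (contComp (g := fun u => Rpower u r)); first exact: interp_cont.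
    exact: Rpower_cont_pt.
pose h := fun w : V => Rminus (interp (toF w) ((1 - lam) * x + lam * y)) (Rpower (S w) (/ r)).
have hc : {for v, continuous h}.
  rewrite /h. apply: contB; first exact: interp_cont.
  apply: (contComp (g := fun u => Rpower u (/ r))); first exact: Sc.
  exact: Rpower_cont_pt.
have hv : Rlt (h v) 0 by rewrite /h /S; lra.
have N1 := nbhs_Rlt hc hv.
have N2 := nbhs_Rgt (interp_cont x v) Ha.
have N3 := nbhs_Rgt (interp_cont y v) Hb.
have [w [Aw [Nw1 [Nw2 Nw3]]]] := Hv _ (filterI N1 (filterI N2 N3)).
move: Aw => [_ [[_ Hc] _]].
have := Hc x y lam Hx Hy Hl.
rewrite /Mr; case: Rlt_dec => Hpw.
- move: Nw1; rewrite /h /S /=. lra.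
- apply: False_ind; apply: Hpw. move: Nw2 Nw3 => /= Nw2 Nw3. nra.
Qed.

Lemma exists_max r eta t : Rlt 0 eta -> Rlt r 0 ->
  exists c : V, Aset r eta c /\
    forall w, Aset r eta w -> Rle (tail B t (toF w)) (tail B t (toF c)).
Proof.
move=> He Hr.
have A0 : Aset r eta !=set0.
  have [w Hw] := toF_row delta.
  exists w. apply: (F_ext B r eta delta) (delta_feasible B r eta He Hr).
  by move=> i Hi; rewrite Hw.
have Acomp : compact (Aset r eta).
  have K1 := A_closed r eta Hr.
  have K2 := @rV_compact R B.+1 (fun _ => (`[0%R, 1%R]%classic : set R)) (fun _ => @segment_compact R 0%R 1%R).
  apply: (subclosed_compact K1 K2).
  move=> w [[Hn Hs] _] i /=.
  have Hi : le i B by apply/ssrnat.leP; rewrite -ltnS ltn_ord.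
  have H1 := Hn i Hi.
  have H2 := sum_term_le (toF w) B i Hn Hi.
  rewrite Hs toF_val in H2. rewrite toF_val in H1.
  by rewrite in_itv /=; apply/andP; split; apply/RleP.
have [c cA cmax] := compact_EVT_max A0 Acomp
   (continuous_subspaceT (fun v => tail_cont t v)).
exists c; split; first by move: cA; rewrite in_setE.
move=> w Aw; apply/RleP; apply: cmax; by rewrite in_setE.
Qed.
End Main.
End MC.

Theorem lemma3 (B k : nat) (r eta : R) :
  (1 <= B)%nat -> (k <= B)%nat ->
  0 < eta < INR k / INR B ->
  r < 0 ->
  exists fstar : nat -> R,
    F_r_eta B r eta fstar /\
    (forall f : nat -> R, F_r_eta B r eta f ->
       tail B (INR k / INR B) f <= tail B (INR k / INR B) fstar).
Proof.
intros HB Hk [He _] Hr.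
destruct (MC.exists_max B r eta (INR k / INR B) He Hr) as [c [Ac Hc]].
exists (MC.toF B c). split; [exact Ac|].
intros f Hf.
destruct (MC.toF_row B f) as [w Hw].
rewrite (tail_ext B _ f (MC.toF B w)) by (intros; symmetry; auto).
apply Hc. apply (F_ext B r eta f); [intros; symmetry; auto | exact Hf].
Qed.
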